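(* Every PCMC model exhibits uniform expansion. Precisely: let $U_1=\{1,\dots,n\}$ carry a PCMC rate family $(q_{mm'})_{m\ne m'}$, and for $k\ge 1$ let $U_k=\{(m,j):1\le m\le n,\ 1\le j\le k\}$ carry a PCMC rate family $(q^{(k)}_{xy})_{x\neq y}$ such that $q^{(k)}_{(m,j),(m',j')}=q_{mm'}$ whenever $m\neq m'$, and $q^{(k)}_{(m,j),(m,j')}=q^{(k)}_{(m,j'),(m,j)}$ for $j\neq j'$ (so the $k$ elements $(m,1),\dots,(m,k)$ are copies of one another). Then for every $m\in\{1,\dots,n\}$, \[p_{m,U_1}=\sum_{j=1}^k p_{(m,j),U_k},\] where $p_{m,U_1}$ and $p_{(m,j),U_k}$ are the PCMC choice probabilities in the respective models.
   Context: Pairwise Choice Markov Chain (PCMC) model: on a finite set $U$ of alternatives, the parameters are off-diagonal rates $q_{ij}\ge 0$ ($i\neq j\in U$) subject to $q_{ij}+q_{ji}\ge 1$ for all distinct $i,j$. $Q_U$ is the $U\times U$ matrix with these off-diagonal entries and diagonal entries $q_{ii}=-\sum_{j\neq i} q_{ij}$; $\pi_U$ is the unique probability vector with $\pi_U^TQ_U=0$, and the choice probability of $i$ from $U$ is $p_{iU}=\pi_U(i)$. Two elements $i,j$ of a set $S$ are copies if $q_{ik}=q_{jk}$ for all $k\in S\setminus\{i,j\}$ and $q_{ij}=q_{ji}$. Uniform expansion is the property that the probability of choosing some copy of an item from a set containing $k$ copies of each of $n$ items equals the probability of choosing that item from the set with one copy of each. *)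

(* Defs.v *)
From HB Require Import structures.
From mathcomp Require Import all_boot all_order all_algebra.
Set Implicit Arguments. Unset Strict Implicit. Unset Printing Implicit Defensive.
Import Order.TTheory GRing.Theory Num.Theory.
Local Open Scope ring_scope.

Definition pcmc_rates (R : realFieldType) (T : finType) (q : T -> T -> R) : Prop :=
  forall i j : T, i != j -> 0 <= q i j /\ 1 <= q i j + q j i.

Definition Qmat (R : realFieldType) (T : finType) (q : T -> T -> R) (i j : T) : R :=
  if i == j then - \sum_(l | l != i) q i l else q i j.

Definition pcmc_stationary (R : realFieldType) (T : finType)
    (q : T -> T -> R) (pi : T -> R) : Prop :=
  (forall i, 0 <= pi i) /\ \sum_i pi i = 1 /\
  (forall j, \sum_i pi i * Qmat q i j = 0).

(* Main.v *)
Require Import Defs.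
From HB Require Import structures.
From mathcomp Require Import all_boot all_order all_algebra.
Import Order.TTheory GRing.Theory Num.Theory.
Local Open Scope ring_scope.

Lemma ker_le0 (R : realFieldType) (T : finType) (q : T -> T -> R) (x : T -> R) :
  pcmc_rates q -> (forall j, \sum_i x i * Qmat q i j = 0) -> \sum_i x i = 0 ->
  forall i, x i <= 0.
Proof.
move=> Hq Hx Hs s; rewrite leNgt; apply/negP => xs.
pose S := [set i | 0 < x i].
have sS : s \in S by rewrite inE.
have H0 : \sum_i x i * (\sum_(j in S) Qmat q i j) = 0.
  under eq_bigr do rewrite mulr_sumr.
  rewrite exchange_big /=; apply: big1 => j _; exact: Hx.
have Hrow i : \sum_(j in S) Qmat q i j =
    if i \in S then - \sum_(l in ~: S) q i l else \sum_(j in S) q i j.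
  case: ifP => iS.
  - rewrite (bigD1 i) //=.
    rewrite (eq_bigr (fun j => q i j)); last first.
      by move=> j /andP [_ ji]; rewrite /Qmat eq_sym (negbTE ji).
    rewrite /Qmat eqxx (bigID (fun l => l \in S)) /=.
    rewrite opprD addrAC.
    have -> : \sum_(j in S | j != i) q i j
       = \sum_(l | (l != i) && (l \in S)) q i l.
      by apply: eq_bigl => l; rewrite andbC.
    rewrite addNr add0r; congr (- _); apply: eq_bigl => l.
    rewrite in_setC; case: (eqVneq l i) => [->|]; by rewrite ?iS.
  - apply: eq_bigr => j jS; rewrite /Qmat; case: eqP => // eij.
    by move: jS; rewrite -eij iS.
rewrite (bigID (fun i => i \in S)) /= in H0.
rewrite [X in X + _ = _](eq_bigr (fun i => - (x i * \sum_(l in ~: S) q i l))) in H0; last first.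
  by move=> i iS; rewrite -mulrN; f_equal; have := Hrow i; rewrite iS => h; exact: h.
rewrite [X in _ + X = _](eq_bigr (fun i => x i * \sum_(j in S) q i j)) in H0; last first.
  by move=> i iS; f_equal; have := Hrow i; rewrite (negbTE iS) => h; exact: h.
move/eqP: H0; rewrite sumrN addrC subr_eq0 => /eqP H0.
set A := \sum_(i | i \notin S) _ in H0.
set B := \sum_(i in S) _ in H0.
have Bge : 0 <= B.
  apply: sumr_ge0 => i iS; apply: mulr_ge0; first by move: iS; rewrite inE => /ltW.
  apply: sumr_ge0 => l; rewrite in_setC => lS.
  have : i != l by apply/eqP => il; move: lS; rewrite -il iS.
  by move/(Hq i l) => [].
have Ale : A <= 0.
  rewrite -oppr_ge0 -sumrN; apply: sumr_ge0 => i iS; rewrite -mulNr.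
  apply: mulr_ge0; first by move: iS; rewrite inE -leNgt oppr_ge0.
  apply: sumr_ge0 => l lS.
  have : i != l by apply/eqP => il; move: iS; rewrite il lS.
  by move/(Hq i l) => [].
have B0 : B = 0 by apply/eqP; rewrite eq_le Bge -H0 Ale.
have A0 : A = 0 by rewrite H0.
have qs0 : forall i, i \notin S -> q s i = 0.
  move=> i iS.
  have := psumr_eq0P _ B0 sS.
  move=> /(_ _)/eqP; rewrite mulf_eq0 (gt_eqF xs) /= => /(_ _)/eqP H.
  have H' : \sum_(l in ~: S) q s l = 0.
    apply: H => j jS; apply: mulr_ge0; first by move: jS; rewrite inE => /ltW.
    apply: sumr_ge0 => l; rewrite in_setC => lS.
    have : j != l by apply/eqP => il; move: lS; rewrite -il jS.
    by move/(Hq j l) => [].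
  apply: (psumr_eq0P _ H'); last by rewrite in_setC.
  move=> l; rewrite in_setC => lS.
  have : s != l by apply/eqP => il; move: lS; rewrite -il sS.
  by move/(Hq s l) => [].
have xi0 : forall i, i \notin S -> x i = 0.
  move=> i iS.
  have Ai : - (x i * \sum_(j in S) q i j) = 0.
    apply: (@psumr_eq0P _ _ (fun i => i \notin S) (fun i => - (x i * \sum_(j in S) q i j))); last exact: iS.
      move=> l lS; rewrite -mulNr; apply: mulr_ge0.
        by move: lS; rewrite inE -leNgt oppr_ge0.
      apply: sumr_ge0 => j jS.
      have : l != j by apply/eqP => il; move: lS; rewrite il jS.
      by move/(Hq l j) => [].
    by apply/eqP; rewrite sumrN oppr_eq0; apply/eqP; exact: A0.
  have isn : i != s by apply/eqP => e; move: iS; rewrite e sS.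
  have [_ H1] := Hq i s isn.
  have qis : 1 <= q i s by move: H1; rewrite (qs0 i iS) addr0.
  have pos : 0 < \sum_(j in S) q i j.
    apply: (lt_le_trans ltr01); apply: (le_trans qis).
    rewrite (bigD1 s) //= lerDl; apply: sumr_ge0 => j /andP [jS js].
    have : i != j by apply/eqP => il; move: iS; rewrite il jS.
    by move/(Hq i j) => [].
  by move/eqP: Ai; rewrite oppr_eq0 mulf_eq0 (gt_eqF pos) orbF => /eqP.
have : x s = 0.
  apply: (psumr_eq0P (P := xpredT)) => // i _.
  case: (boolP (i \in S)) => iS; first by move: iS; rewrite inE => /ltW.
  by rewrite xi0.
by move=> e; move: xs; rewrite e ltxx.
Qed.

Theorem proposition4 (R : realFieldType) (n k : nat) (Hk : (0 < k)%N)
    (q : 'I_n -> 'I_n -> R) (qk : ('I_n * 'I_k)%type -> ('I_n * 'I_k)%type -> R)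
    (pi1 : 'I_n -> R) (pik : ('I_n * 'I_k)%type -> R) :
  pcmc_rates q ->
  pcmc_rates qk ->
  (forall (m m' : 'I_n) (j j' : 'I_k), m != m' -> qk (m, j) (m', j') = q m m') ->
  (forall (m : 'I_n) (j j' : 'I_k), j != j' -> qk (m, j) (m, j') = qk (m, j') (m, j)) ->
  pcmc_stationary q pi1 ->
  pcmc_stationary qk pik ->
  forall m : 'I_n, pi1 m = \sum_(j < k) pik (m, j).
Proof.
move=> Hq Hqk Hcross _ [p1ge [p1s p1Q]] [pkge [pks pkQ]] m.
pose sig := fun m => \sum_(j < k) pik (m, j).
have sigs : \sum_m sig m = 1.
  by rewrite /sig pair_bigA /= -pks; apply: eq_bigr => -[a b].
have Hcol : forall (p : ('I_n * 'I_k)%type) (m' : 'I_n),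
    \sum_(j' < k) Qmat qk p (m', j') = k%:R * Qmat q p.1 m'.
  move=> [a j] m' /=.
  case: (eqVneq a m') => [<-|am].
  - rewrite (bigD1 j) //= {1}/Qmat eqxx /Qmat eqxx.
    rewrite (eq_bigr (fun j' => qk (a, j) (a, j'))); last first.
      by move=> j' jj; rewrite xpair_eqE eqxx /= eq_sym (negbTE jj).
    rewrite (bigID (fun l => l.1 == a)) /=.
    rewrite [X in - (X + _)](eq_bigl (fun l => (l.1 == a) && (l.2 != j))); last first.
      move=> [c d] /=; case: (eqVneq c a) => [->|ca]; rewrite ?andbT ?andbF //=.
      by apply/negb_inj; rewrite !negbK; apply/eqP/eqP => [[]|->].
    rewrite [X in - (_ + X)](eq_bigl (fun l => l.1 != a)); last first.
      move=> [c d] /=; case: (eqVneq c a) => [->|ca]; rewrite ?andbT ?andbF //=.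
      by apply/eqP => -[] e; move: ca; rewrite e eqxx.
    have -> : \sum_(l | (l.1 == a) && (l.2 != j)) qk (a, j) l
        = \sum_(j' | j' != j) qk (a, j) (a, j').
      transitivity (\sum_(c | c == a) \sum_(d | d != j) qk (a, j) (c, d)); last by rewrite big_pred1_eq.
      by rewrite pair_big_dep; apply: eq_big => -[c d].
    have -> : \sum_(l | l.1 != a) qk (a, j) l
        = \sum_(c | c != a) k%:R * q a c.
      transitivity (\sum_(c | c != a) \sum_(d < k) qk (a, j) (c, d)).
        by rewrite pair_big_dep; apply: eq_big => -[c d] //=; rewrite andbT.
      apply: eq_bigr => c ca.
      rewrite (eq_bigr (fun _ => q a c)); first by rewrite sumr_const card_ord mulr_natl.
      by move=> d _; rewrite Hcross // eq_sym.
    by rewrite opprD addrAC addNr add0r mulrN mulr_sumr.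
  - rewrite {2}/Qmat (negbTE am).
    rewrite (eq_bigr (fun _ => q a m')); first by rewrite sumr_const card_ord mulr_natl.
    move=> j' _; rewrite /Qmat; case: eqP => [[e _]|_]; last exact: Hcross.
    by move: am; rewrite e eqxx.
have sigQ : forall m', \sum_m sig m * Qmat q m m' = 0.
  move=> m'.
  have E : \sum_(j' < k) \sum_p pik p * Qmat qk p (m', j') = 0.
    by apply: big1 => j' _; exact: pkQ.
  rewrite exchange_big /= in E.
  rewrite (eq_bigr (fun p => pik p * (k%:R * Qmat q p.1 m'))) in E; last first.
    by move=> p _; rewrite -mulr_sumr Hcol.
  have : k%:R * \sum_m sig m * Qmat q m m' = 0 :> R.
    rewrite mulr_sumr -[RHS]E.
    transitivity (\sum_c \sum_d pik (c, d) * (k%:R * Qmat q c m')).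
      apply: eq_bigr => c _.
      rewrite /sig mulr_suml mulr_sumr; apply: eq_bigr => d _.
      by rewrite mulrCA.
    by rewrite pair_bigA; apply: eq_bigr => -[c d].
  have kn : (k == 0)%N = false by move: Hk; case: (k).
  by move/eqP; rewrite mulf_eq0 pnatr_eq0 kn /= => /eqP.
pose x := fun m => pi1 m - sig m.
have xQ : forall j, \sum_i x i * Qmat q i j = 0.
  move=> j; under eq_bigr do rewrite mulrBl.
  by rewrite sumrB p1Q sigQ subrr.
have xs : \sum_i x i = 0 by rewrite sumrB p1s sigs subrr.
have h1 := @ker_le0 _ _ q x Hq xQ xs m.
have h2 := @ker_le0 _ _ q (fun i => - x i) Hq.
have h2' : - x m <= 0.
  apply: h2; last by rewrite sumrN xs oppr0.
  by move=> j; under eq_bigr do rewrite mulNr; rewrite sumrN xQ oppr0.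
apply/eqP; rewrite -subr_eq0; apply/eqP; apply/eqP; rewrite eq_le h1 -oppr_le0 h2' //.
Qed.
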